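(* Let $s>0$. For all $\tau>0$, $$2\pi\Big(1+\frac{4s^2}{\tau^2}\Big)^{1/2}\le\sup_{\xi\in\mathbb R^3}\mu_s*\mu_s(\xi,\tau)\le2\pi\Big(1+\frac{2s}{\tau}\Big).$$ In particular $\lim_{\tau\to\infty}\sup_{\xi\in\mathbb R^3}\mu_s*\mu_s(\xi,\tau)=2\pi$.
   Context: For $s>0$, $\mu_s$ is the measure on $\mathbb R^4$ with $\int g\,d\mu_s=\int_{|y|>s}g(y,\sqrt{|y|^2-s^2})\frac{dy}{\sqrt{|y|^2-s^2}}$, and $\mu_s*\mu_s$ is its self-convolution, identified with its (Lebesgue) density on $\mathbb R^4$, which for $\tau\ge0$ is given by the explicit formula $\mu_s*\mu_s(\xi,\tau)=\frac{2\pi}{|\xi|}\big(|\xi|(1+\frac{4s^2}{\tau^2-|\xi|^2})^{1/2}\mathbb 1_{\{|\xi|<\sqrt{\tau^2+s^2}-s\}}+\tau\mathbb 1_{\{\sqrt{\tau^2+s^2}-s\le|\xi|\le\sqrt{\tau^2+4s^2}\}}+(\tau-|\xi|(1+\frac{4s^2}{\tau^2-|\xi|^2})^{1/2})\mathbb 1_{\{\sqrt{\tau^2+4s^2}<|\xi|\le\sqrt{\tau^2+s^2}+s\}}\big)$, with value $2\pi(1+4s^2/\tau^2)^{1/2}$ at $\xi=0$. *)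

(* Defs.v *)
From HB Require Import structures.
From mathcomp Require Import all_boot all_order all_algebra.
From mathcomp Require Import all_classical all_reals all_analysis.
Set Implicit Arguments. Unset Strict Implicit. Unset Printing Implicit Defensive.
Import Order.TTheory GRing.Theory Num.Theory.
Import numFieldNormedType.Exports.
Local Open Scope ring_scope.

Definition enorm3 (R : realType) (xi : 'rV[R]_3) : R :=
  Num.sqrt (\sum_(i < 3) xi ord0 i ^+ 2).

(* The (Lebesgue) density of mu_s * mu_s at (xi, tau), for tau >= 0, given by
   the explicit formula of the paper; at xi = 0 it is 2 pi (1 + 4 s^2/tau^2)^(1/2). *)
Definition musconv (R : realType) (s : R) (xi : 'rV[R]_3) (tau : R) : R :=
  let r := enorm3 xi in
  if r == 0 then 2 * pi * Num.sqrt (1 + 4 * s ^+ 2 / tau ^+ 2)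
  else (2 * pi / r) *
    ((if r < Num.sqrt (tau ^+ 2 + s ^+ 2) - s then
        r * Num.sqrt (1 + 4 * s ^+ 2 / (tau ^+ 2 - r ^+ 2)) else 0)
     + (if (Num.sqrt (tau ^+ 2 + s ^+ 2) - s <= r) && (r <= Num.sqrt (tau ^+ 2 + 4 * s ^+ 2))
        then tau else 0)
     + (if (Num.sqrt (tau ^+ 2 + 4 * s ^+ 2) < r) && (r <= Num.sqrt (tau ^+ 2 + s ^+ 2) + s)
        then tau - r * Num.sqrt (1 + 4 * s ^+ 2 / (tau ^+ 2 - r ^+ 2)) else 0)).

(* Main.v *)
Require Import Defs.
From HB Require Import structures.
From mathcomp Require Import all_boot all_order all_algebra.
From mathcomp Require Import all_classical all_reals all_analysis.
From mathcomp Require Import ring lra.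
Import Order.TTheory GRing.Theory Num.Theory.
Import numFieldNormedType.Exports.
Local Open Scope ring_scope.
Local Open Scope classical_set_scope.
Lemma sqrt_le_aux (R : realType) (x y : R) : 0 <= y -> x <= y ^+ 2 -> Num.sqrt x <= y.
Proof.
move=> y0 xy. have [x0|x0] := leP 0 x.
- have z0 := sqrtr_ge0 x; have zz := sqr_sqrtr x0.
  rewrite leNgt; apply/negP => hlt. nra.
- by rewrite ler0_sqrtr // ltW.
Qed.

Lemma key (R : realType) (s tau r : R) : 0 < s -> 0 < tau -> 0 < r ->
  r^-1 *
    ((if r < Num.sqrt (tau ^+ 2 + s ^+ 2) - s then
        r * Num.sqrt (1 + 4 * s ^+ 2 / (tau ^+ 2 - r ^+ 2)) else 0)
     + (if (Num.sqrt (tau ^+ 2 + s ^+ 2) - s <= r) && (r <= Num.sqrt (tau ^+ 2 + 4 * s ^+ 2))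
        then tau else 0)
     + (if (Num.sqrt (tau ^+ 2 + 4 * s ^+ 2) < r) && (r <= Num.sqrt (tau ^+ 2 + s ^+ 2) + s)
        then tau - r * Num.sqrt (1 + 4 * s ^+ 2 / (tau ^+ 2 - r ^+ 2)) else 0))
  <= 1 + 2 * s / tau.
Proof.
move=> s0 t0 r0.
set q := Num.sqrt (tau ^+ 2 + s ^+ 2).
set b := Num.sqrt (tau ^+ 2 + 4 * s ^+ 2).
have q0 : 0 <= q := sqrtr_ge0 _.
have qq : q ^+ 2 = tau ^+ 2 + s ^+ 2 by rewrite sqr_sqrtr //; nra.
have b0 : 0 <= b := sqrtr_ge0 _.
have bb : b ^+ 2 = tau ^+ 2 + 4 * s ^+ 2 by rewrite sqr_sqrtr //; nra.
have qs : s < q by nra.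
have qts : q <= tau + s by nra.
have bt : tau < b by nra.
have hB : 1 <= 1 + 2 * s / tau by rewrite lerDl; apply: divr_ge0; lra.
case: (ltP r (q - s)) => h1.
  rewrite (_ : (b < r) = false) /=; last by apply/negbTE; rewrite -leNgt; lra.
  rewrite !addr0 mulrA mulVf ?gt_eqF // mul1r.
  apply: sqrt_le_aux; first lra.
  set d := tau ^+ 2 - r ^+ 2.
  have dpos : 2 * s * (q - s) < d by rewrite /d; nra.
  have d0 : 0 < d by nra.
  have E : (1 + 2 * s / tau) ^+ 2 - (1 + 4 * s ^+ 2 / d)
     = (d^-1 * tau^-2) * (4 * s * tau * d + 4 * s ^+ 2 * d - 4 * s ^+ 2 * tau ^+ 2).
    by field; rewrite ?gt_eqF.
  have P : 0 <= 4 * s * tau * d + 4 * s ^+ 2 * d - 4 * s ^+ 2 * tau ^+ 2.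
    have h2 : 0 <= s * (q - s) * (2 * (tau + s) - (q + s)).
      by apply: mulr_ge0; [apply: mulr_ge0|]; lra.
    have h4 : 0 <= (d - 2 * s * (q - s)) * (4 * s * (tau + s)).
      by apply: mulr_ge0; [lra|nra].
    nra.
  rewrite -subr_ge0 E; apply: mulr_ge0 => //.
  by apply: mulr_ge0; rewrite ?invr_ge0 ?exprn_ge0 //; lra.
case: (leP r b) => h2 /=.
  rewrite add0r addr0.
  have E : (1 + 2 * s / tau) - r^-1 * tau
     = (r^-1 * tau^-1) * (r * tau + 2 * s * r - tau ^+ 2).
    by field; rewrite ?gt_eqF.
  have P : 0 <= r * tau + 2 * s * r - tau ^+ 2.
    have h3 : 0 <= (r - (q - s)) * (tau + 2 * s) by apply: mulr_ge0; lra.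
    nra.
  rewrite -subr_ge0 E; apply: mulr_ge0 => //.
  by apply: mulr_ge0; rewrite ?invr_ge0; lra.
rewrite add0r add0r.
case: ifP => _; last by rewrite mulr0; lra.
have S0 := sqrtr_ge0 (1 + 4 * s ^+ 2 / (tau ^+ 2 - r ^+ 2)).
rewrite mulrBr mulrA mulVf ?gt_eqF // mul1r.
have : r^-1 * tau <= 1 by rewrite mulrC ler_pdivrMr // mul1r; lra.
lra.
Qed.

Lemma musconv_ub (R : realType) (s tau : R) (xi : 'rV[R]_3) : 0 < s -> 0 < tau ->
  musconv s xi tau <= 2 * pi * (1 + 2 * s / tau).
Proof.
move=> s0 t0; have p0 : 0 < 2 * pi :> R by rewrite mulr_gt0 ?pi_gt0.
rewrite /musconv; case: ifP => hr.
  rewrite ler_pM2l //; apply: sqrt_le_aux.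
    by rewrite addr_ge0 ?divr_ge0 //; lra.
  have E : (1 + 2 * s / tau) ^+ 2 - (1 + 4 * s ^+ 2 / tau ^+ 2) = 4 * s / tau.
    by field; rewrite gt_eqF.
  by rewrite -subr_ge0 E divr_ge0 //; lra.
have r0 : 0 < enorm3 xi by rewrite lt_neqAle eq_sym hr sqrtr_ge0.
by rewrite -mulrA ler_pM2l // key.
Qed.

Lemma musconv0 (R : realType) (s tau : R) :
  musconv s (0 : 'rV[R]_3) tau = 2 * pi * Num.sqrt (1 + 4 * s ^+ 2 / tau ^+ 2).
Proof.
rewrite /musconv /enorm3.
have -> : \sum_(i < 3) (0 : 'rV[R]_3) ord0 i ^+ 2 = 0.
  by rewrite big1 // => i _; rewrite mxE expr0n.
by rewrite sqrtr0 eqxx.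
Qed.

Theorem lemma3p2 (R : realType) (s : R) (hs : 0 < s) :
  (forall tau : R, 0 < tau ->
     2 * pi * Num.sqrt (1 + 4 * s ^+ 2 / tau ^+ 2)
       <= sup [set musconv s xi tau | xi in [set: 'rV[R]_3]]
     /\ sup [set musconv s xi tau | xi in [set: 'rV[R]_3]]
       <= 2 * pi * (1 + 2 * s / tau))
  /\ sup [set musconv s xi tau | xi in [set: 'rV[R]_3]]
       @[tau --> +oo] --> (2 * pi : R).
Proof.
have B : forall tau : R, 0 < tau ->
     2 * pi * Num.sqrt (1 + 4 * s ^+ 2 / tau ^+ 2)
       <= sup [set musconv s xi tau | xi in [set: 'rV[R]_3]]
     /\ sup [set musconv s xi tau | xi in [set: 'rV[R]_3]]
       <= 2 * pi * (1 + 2 * s / tau).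
  move=> tau t0; split.
    rewrite -musconv0; apply: ub_le_sup; last by exists 0.
    exists (2 * pi * (1 + 2 * s / tau)) => _ [xi _ <-].
    exact: musconv_ub.
  apply: ge_sup; first by exists (musconv s 0 tau), 0.
  by move=> _ [xi _ <-]; exact: musconv_ub.
split => //.
have p0 : 0 < 2 * pi :> R by rewrite mulr_gt0 ?pi_gt0.
have hinv : (fun t : R => t^-1) @ +oo --> (0 : R).
  apply/(@gtr0_cvgV0 _ _ _ _ (fun t : R => t)); last exact: cvg_id.
  by exists 0; split => //; rewrite real0.
have H : (fun t : R => 2 * pi * (1 + 2 * s / t)) @ +oo --> (2 * pi : R).
  rewrite [X in _ --> X](_ : _ = 2 * pi * (1 + 2 * s * 0)); last first.
    by rewrite mulr0 addr0 mulr1.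
  apply: cvgMr; apply: cvgD; first exact: cvg_cst.
  exact: cvgMr.
apply: (squeeze_cvgr _ (cvg_cst (2 * pi)) H).
near=> t.
have t0 : 0 < t by near: t; apply: nbhs_pinfty_gt; rewrite real0.
have [B1 B2] := B t t0.
apply/andP; split => //.
apply: le_trans B1.
rewrite ler_pMr // -{1}sqrtr1; apply: ler_wsqrtr.
by rewrite lerDl divr_ge0 ?exprn_ge0 ?mulr_ge0 //; lra.
Unshelve. all: end_near.
Qed.
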